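(* Consider a generalized cluster pattern with principal coefficients at $t_0$, and let $t\in\mathbb T_n$ be arbitrary. Then: (1) For $i\neq k$ in $[1,n]$, the entries $c^{(i)}_{(k,l),j}$ of $C^{(i)}_t$ with $l\in[1,r_k]$, $j\in[1,r_i]$ are all equal (independent of $l$ and $j$). (2) For each $i$, there are an integer $c$ and a sign $\epsilon\in\{1,-1\}$ such that $c^{(i)}_{(i,l),l}=c+\epsilon$ for all $l\in[1,r_i]$ and $c^{(i)}_{(i,l),j}=c$ for all $l\neq j$ in $[1,r_i]$.
   Context: A semifield $(\mathbb P,\oplus,\cdot)$ is a torsion-free multiplicative abelian group with a commutative, associative binary operation $\oplus$ over which multiplication distributes. For $p\in\mathbb P$ put $p^+=p/(p\oplus1)$, $p^-=1/(p\oplus1)$. The tropical semifield $\mathrm{Trop}(s_a\mid a\in I')$ ($I'$ finite) is the free abelian group on the $s_a$ with $\prod_a s_a^{a_a}\oplus\prod_a s_a^{b_a}=\prod_a s_a^{\min(a_a,b_a)}$. For skew-symmetrizable $B\in\mathrm{Mat}_{n\times n}(\mathbb Z)$, $\mu_k(B)$ denotes Fomin–Zelevinsky matrix mutation. Generalized labeled seed: fix positive integers $r_1,\dots,r_n$; a seed $\Sigma=(\mathbf x,\mathbf p,B)$ has $B$ skew-symmetrizable with $i$-th column divisible by $r_i$, coefficients $\mathbf p_i=(p_{i,1},\dots,p_{i,r_i})\in\mathbb P^{r_i}$, and cluster $\mathbf x$. With $\beta_{ij}=b_{ij}/r_j$, $p_{k;\pm}=\prod_{l=1}^{r_k}p_{k,l}^{\pm}$,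 the coefficient part of the mutation $\mu_k$ is: $B'=\mu_k(B)$, $p'_{k,j}=p_{k,j}^{-1}$, and for $i\neq k$: $p'_{i,j}=p_{i,j}p_{k;-}^{\beta_{ki}}$ if $\beta_{ik}>0$, $p'_{i,j}=p_{i,j}p_{k;+}^{\beta_{ki}}$ if $\beta_{ik}\le 0$ (the cluster mutates by $x'_k=x_k^{-1}\prod_l(p_{k,l}^+\prod_{b_{ik}>0}x_i^{\beta_{ik}}+p_{k,l}^-\prod_{b_{ik}<0}x_i^{-\beta_{ik}})$, $x'_i=x_i$ otherwise). A cluster pattern assigns seeds $\Sigma_t$ to vertices of the $n$-regular tree $\mathbb T_n$ with edges labeled $1,\dots,n$, adjacent seeds along a $k$-edge related by $\mu_k$; coefficients of $\Sigma_t$ are written $p_{i,j;t}$. Principal coefficients at $t_0$: $\mathbb P=\mathrm{Trop}(p_{i,j}\mid i\in[1,n],j\in[1,r_i])$ and $\Sigma_{t_0}$ has coefficients $\mathbf p_i=(p_{i,1},\dots,p_{i,r_i})$. Let $I'=\{(k,l):k\in[1,n],l\in[1,r_k]\}$ and $p_{(k,l)}=p_{k,l}$. For each $t$ and $i$, define $C^{(i)}_t=(c^{(i)}_{a,j})_{a\in I',j\in[1,r_i]}\in\mathrm{Mat}_{|I'|\times r_i}(\mathbb Z)$ by $p_{i,j;t}=\prod_{a\in I'}p_a^{c^{(i)}_{a,j}}$. *)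

(* Defs.v *)
From mathcomp Require Import all_boot all_order all_algebra.
Set Implicit Arguments. Unset Strict Implicit. Unset Printing Implicit Defensive.
Import Order.TTheory GRing.Theory Num.Theory.
Local Open Scope ring_scope.

(* Index set I' = {(k,l) : k in [1,n], l in [1,r_k]} (0-based here). *)
Definition Iprime (n : nat) (r : 'I_n -> nat) := {k : 'I_n & 'I_(r k)}.

Definition idx (n : nat) (r : 'I_n -> nat) (k : 'I_n) (l : 'I_(r k)) : Iprime r :=
  existT (fun k => 'I_(r k)) k l.

(* An element of Trop(p_a | a in I') is written multiplicatively as
   prod_a p_a^{e a}; we store the exponent vector e : I' -> int.
   Multiplication = addition of exponents, (+) = componentwise min. *)
Definition trop (n : nat) (r : 'I_n -> nat) := Iprime r -> int.

Definition coeffs (n : nat) (r : 'I_n -> nat) := forall i : 'I_n, 'I_(r i) -> trop r.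

(* In the tropical semifield: p^+ = p/(p(+)1) has exponents max(e,0),
   p^- = 1/(p(+)1) has exponents max(-e,0). *)
Definition trop_plus n (r : 'I_n -> nat) (x : trop r) : trop r :=
  fun a => Num.max (x a) 0.
Definition trop_minus n (r : 'I_n -> nat) (x : trop r) : trop r :=
  fun a => Num.max (- x a) 0.

Definition pk_plus n (r : 'I_n -> nat) (p : coeffs r) (k : 'I_n) : trop r :=
  fun a => \sum_(l < r k) trop_plus (p k l) a.
Definition pk_minus n (r : 'I_n -> nat) (p : coeffs r) (k : 'I_n) : trop r :=
  fun a => \sum_(l < r k) trop_minus (p k l) a.

Definition beta n (r : 'I_n -> nat) (B : 'M[int]_n) (i j : 'I_n) : int :=
  (B i j %/ (r j)%:Z)%Z.

Definition mut_mat n (k : 'I_n) (B : 'M[int]_n) : 'M[int]_n :=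
  \matrix_(i, j)
    if (i == k) || (j == k) then - B i j
    else B i j + Num.max (B i k) 0 * Num.max (B k j) 0
               - Num.max (- B i k) 0 * Num.max (- B k j) 0.

Definition mut_coeff n (r : 'I_n -> nat) (B : 'M[int]_n) (p : coeffs r) (k : 'I_n)
  : coeffs r :=
  fun i j a =>
    if i == k then - p i j a
    else if 0 < beta r B i k then p i j a + beta r B k i * pk_minus p k a
    else p i j a + beta r B k i * pk_plus p k a.

Definition mut_step n (r : 'I_n -> nat) (s : 'M[int]_n * coeffs r) (k : 'I_n)
  : 'M[int]_n * coeffs r :=
  (mut_mat k s.1, @mut_coeff n r s.1 s.2 k).

(* The seed at the vertex t of T_n reached from t0 along edges labelled
   ks = [k1; ...; km] (in this order). *)
Definition seed_at n (r : 'I_n -> nat) (B0 : 'M[int]_n) (p0 : coeffs r)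
  (ks : seq 'I_n) : 'M[int]_n * coeffs r :=
  foldl (@mut_step n r) (B0, p0) ks.

(* principal coefficients: p_{i,j} at t0 is the generator p_{(i,j)} *)
Definition principal n (r : 'I_n -> nat) : coeffs r :=
  fun i j a => if (projT1 a == i) && (val (projT2 a) == val j) then 1 else 0.

(* c^{(i)}_{a,j} at t: exponent of p_a in p_{i,j;t} *)
Definition Cmat n (r : 'I_n -> nat) (B0 : 'M[int]_n) (ks : seq 'I_n)
  (i : 'I_n) (a : Iprime r) (j : 'I_(r i)) : int :=
  (@seed_at n r B0 (@principal n r) ks).2 i j a.

Definition skew_symmetrizable n (B : 'M[int]_n) : Prop :=
  exists d : 'I_n -> int, (forall i, 0 < d i) /\
    (forall i j, d i * B i j = - (d j * B j i)).

(* Main.v *)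
Require Import Defs.
From mathcomp Require Import all_boot all_order all_algebra.
Import Order.TTheory GRing.Theory Num.Theory.
Local Open Scope ring_scope.
Set Implicit Arguments. Unset Strict Implicit. Unset Printing Implicit Defensive.

Definition indc n (r : 'I_n -> nat) (i : 'I_n) (j : 'I_(r i)) (a : Iprime r) : int :=
  if (projT1 a == i) && (val (projT2 a) == val j) then 1 else 0.

Definition invp n (r : 'I_n -> nat) (p : coeffs r) : Prop :=
  forall i, exists w : Iprime r -> int, exists eps : int,
    (eps = 1 \/ eps = -1) /\ (forall a b, projT1 a = projT1 b -> w a = w b) /\
    (forall j a, p i j a = w a + eps * indc j a).

Lemma sum_one (N x : nat) (F : bool -> int) : (x < N)%N ->
  \sum_(l < N) F (val l == x) = F true + F false *+ N.-1.
Proof.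
move=> hx.
rewrite (bigD1 (Ordinal hx)) //= eqxx; congr (_ + _).
rewrite (eq_bigr (fun=> F false)); last first.
  move=> l hl; congr F; apply/negbTE; apply: contra hl => /eqP h.
  by apply/eqP; apply: val_inj.
rewrite sumr_const; congr (_ *+ _).
rewrite cardC1 card_ord //.
Qed.

Lemma pk_const n (r : 'I_n -> nat) (p : coeffs r) (k : 'I_n) (F : int -> int) w eps :
  (forall a b, projT1 a = projT1 b -> w a = w b) ->
  (forall j a, p k j a = w a + eps * indc j a) ->
  forall a b, projT1 a = projT1 b ->
  \sum_(l < r k) F (p k l a) = \sum_(l < r k) F (p k l b).
Proof.
move=> hw hp a b hab.
under eq_bigr => l _ do rewrite hp.
under [RHS]eq_bigr => l _ do rewrite hp.
rewrite (hw a b hab) /indc.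
have -> : (projT1 a == k) = (projT1 b == k) by rewrite hab.
case: (eqVneq (projT1 b) k) => hk; last first.
  by apply: eq_bigr => l _ /=.
have ha : (val (projT2 a) < r k)%N by rewrite -hk -hab; exact: ltn_ord.
have hb : (val (projT2 b) < r k)%N by rewrite -hk; exact: ltn_ord.
rewrite /=.
pose G := fun c : bool => F (w b + eps * (if c then 1 else 0)).
rewrite (eq_bigr (fun l : 'I_(r k) => G (val l == val (projT2 a)))); last first.
  by move=> l _; rewrite /G eq_sym.
rewrite [RHS](eq_bigr (fun l : 'I_(r k) => G (val l == val (projT2 b)))); last first.
  by move=> l _; rewrite /G eq_sym.
by rewrite !sum_one.
Qed.

Lemma invp_mut n (r : 'I_n -> nat) (B : 'M[int]_n) (p : coeffs r) (k : 'I_n) :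
  invp p -> invp (mut_coeff B p k).
Proof.
move=> hp i.
have [wk [ek [hek [hwk hpk]]]] := hp k.
have hplus : forall a b, projT1 a = projT1 b -> pk_plus p k a = pk_plus p k b.
  by move=> a b hab; rewrite /pk_plus /trop_plus; exact: (pk_const (fun x => Num.max x 0) hwk hpk).
have hminus : forall a b, projT1 a = projT1 b -> pk_minus p k a = pk_minus p k b.
  by move=> a b hab; rewrite /pk_minus /trop_minus; exact: (pk_const (fun x => Num.max (- x) 0) hwk hpk).
have [w [e [he [hw hpi]]]] := hp i.
rewrite /mut_coeff.
case: (eqVneq i k) => hik.
  exists (fun a => - w a), (- e); split.
    by case: he => ->; [right|left].
  split; first by move=> a b hab; rewrite (hw a b hab).
  by move=> j a; rewrite hpi opprD mulNr.
case: (boolP (0 < beta r B i k)) => hb.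
  exists (fun a => w a + beta r B k i * pk_minus p k a), e; split => //.
  split; first by move=> a b hab; rewrite (hw a b hab) (hminus a b hab).
  by move=> j a; rewrite hpi addrAC.

exists (fun a => w a + beta r B k i * pk_plus p k a), e; split => //.
split; first by move=> a b hab; rewrite (hw a b hab) (hplus a b hab).
by move=> j a; rewrite hpi addrAC.
Qed.

Lemma invp_fold n (r : 'I_n -> nat) (ks : seq 'I_n) (B : 'M[int]_n) (p : coeffs r) :
  invp p -> invp (foldl (@mut_step n r) (B, p) ks).2.
Proof.
elim: ks B p => [|k ks IH] B p hp //=.
by apply: IH; apply: invp_mut.
Qed.

Lemma invp_principal n (r : 'I_n -> nat) : invp (@principal n r).
Proof.
move=> i; exists (fun=> 0), 1; split; first by left.
split => // j a; by rewrite add0r mul1r.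
Qed.

Theorem mainTheorem4 (n : nat) (r : 'I_n -> nat) (B0 : 'M[int]_n)
  (hr : forall i, (0 < r i)%N)
  (hskew : skew_symmetrizable B0)
  (hdiv : forall i j : 'I_n, ((r j)%:Z %| B0 i j)%Z)
  (ks : seq 'I_n) :
  (forall (i k : 'I_n), i != k ->
     forall (l l' : 'I_(r k)) (j j' : 'I_(r i)),
       @Cmat n r B0 ks i (@idx n r k l) j = @Cmat n r B0 ks i (@idx n r k l') j')
  /\
  (forall i : 'I_n, exists c : int, exists eps : int,
     (eps = 1 \/ eps = -1) /\
     (forall l : 'I_(r i), @Cmat n r B0 ks i (@idx n r i l) l = c + eps) /\
     (forall l j : 'I_(r i), l != j -> @Cmat n r B0 ks i (@idx n r i l) j = c)).
Proof.
have H := invp_fold ks B0 (invp_principal r).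
rewrite /Cmat /seed_at; split.
  move=> i k hik l l' j j'.
  have [w [e [he [hw hpi]]]] := H i.
  rewrite !hpi /indc /= eq_sym (negbTE hik) /=.
  by rewrite (hw (idx l) (idx l') erefl).
move=> i.
have [w [e [he [hw hpi]]]] := H i.
exists (w (idx (Ordinal (hr i)))), e; split => //; split.
  move=> l; rewrite hpi /indc /= !eqxx /= mulr1.
  by rewrite (hw (idx l) (idx (Ordinal (hr i))) erefl).
move=> l j hlj; rewrite hpi /indc /= eqxx /=.
have -> : (val l == val j) = false by apply/negbTE.
by rewrite mulr0 addr0 (hw (idx l) (idx (Ordinal (hr i))) erefl).
Qed.
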